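(* Let $p,q\in[1,\infty]$ and consider the identity functor on the category of finitely encoded one-parameter persistence modules over $\mathbb R$, viewed as a functor from this category with amplitude $\rho_p$ to the same category with amplitude $\rho_q$. Then $\rho_q(M)\le\rho_p(M)$ for all $M$ (i.e. the identity is amplitude-bounding with constant $K=1$) if and only if $p\le q$. Moreover, if $p>q$, there is no $K\ge0$ with $\rho_q(M)\le K\rho_p(M)$ for all $M$.
   Context: Finitely encoded persistence modules over $\mathbb R$ (functors from $\mathbb R$ to finite-dimensional vector spaces that are pullbacks of modules over a finite poset along an order-preserving map) form an abelian category, and each is isomorphic to a finite direct sum of interval modules $\mathbb I\langle b_j,d_j\rangle$ (the field on an interval with endpoints $b_j\le d_j$, each end open or closed, zero elsewhere). The $p$-norm amplitude is $\rho_p(M)=(\sum_j|d_j-b_j|^p)^{1/p}$ for $p<\infty$ and $\rho_\infty(M)=\max_j|d_j-b_j|$. *)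

(* Defs.v *)
From mathcomp Require Import all_boot all_order all_algebra.
From mathcomp Require Import boolp classical_sets reals constructive_ereal ereal exp.
Set Implicit Arguments. Unset Strict Implicit. Unset Printing Implicit Defensive.
Import Order.TTheory GRing.Theory Num.Theory.
Local Open Scope ring_scope.

(* The space at t is k^(pdim t) (row vectors), and the structure map
   M(s <= t) acts by v |-> v *m pmap s t.  (pmap s t for s > t is irrelevant.) *)
Record pmod (k : fieldType) (R : realType) := PMod {
  pdim : R -> nat;
  pmap : forall s t : R, 'M[k]_(pdim s, pdim t) }.

Definition is_pmod (k : fieldType) (R : realType) (M : pmod k R) : Prop :=
  (forall t, pmap M t t = 1%:M) /\
  (forall s t u, s <= t -> t <= u -> pmap M s t *m pmap M t u = pmap M s u).

Definition pmod_iso (k : fieldType) (R : realType) (M N : pmod k R) : Prop :=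
  exists f : forall t, 'M[k]_(pdim M t, pdim N t),
    (forall t, exists g : 'M[k]_(pdim N t, pdim M t),
        f t *m g = 1%:M /\ g *m f t = 1%:M) /\
    (forall s t, s <= t -> pmap M s t *m f t = f s *m pmap N s t).

Record fpmod (k : fieldType) (P : finType) := FPMod {
  fdim : P -> nat;
  fmap : forall x y : P, 'M[k]_(fdim x, fdim y) }.

Definition is_fpmod (k : fieldType) (P : finType) (le : rel P) (N : fpmod k P) : Prop :=
  (forall x, fmap N x x = 1%:M) /\
  (forall x y z, le x y -> le y z -> fmap N x y *m fmap N y z = fmap N x z).

Definition is_partial_order (P : finType) (le : rel P) : Prop :=
  reflexive le /\ antisymmetric le /\ transitive le.

Definition pullback (k : fieldType) (R : realType) (P : finType) (pi : R -> P)
  (N : fpmod k P) : pmod k R :=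
  @PMod k R (fun t => fdim N (pi t)) (fun s t => fmap N (pi s) (pi t)).

Definition finitely_encoded (k : fieldType) (R : realType) (M : pmod k R) : Prop :=
  exists (P : finType) (le : rel P), is_partial_order le /\
  exists pi : R -> P, (forall s t, s <= t -> le (pi s) (pi t)) /\
  exists N : fpmod k P, is_fpmod le N /\ pmod_iso M (pullback pi N).

Record bar (R : realType) := Bar {
  bb : \bar R; bd : \bar R; bclosed : bool; dclosed : bool }.

Definition wf_bar (R : realType) (I : bar R) : bool :=
  [&& (bb I <= bd I)%E, bb I != +oo%E & bd I != -oo%E].

Definition in_bar (R : realType) (I : bar R) (t : R) : bool :=
  (if bclosed I then (bb I <= t%:E)%E else (bb I < t%:E)%E) &&
  (if dclosed I then (t%:E <= bd I)%E else (t%:E < bd I)%E).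

Definition bar0 (R : realType) : bar R := @Bar R 0%E 0%E false false.

Definition bidx (R : realType) (B : seq (bar R)) (t : R) : seq nat :=
  [seq j <- iota 0 (size B) | in_bar (nth (bar0 R) B j) t].

(* The direct sum of the interval modules of B: at t the basis is indexed by
   the bars containing t, and the structure map sends the basis vector of bar j
   to the basis vector of bar j (or 0 if bar j does not contain the target). *)
Definition barmod (k : fieldType) (R : realType) (B : seq (bar R)) : pmod k R :=
  @PMod k R (fun t => size (bidx B t))
    (fun s t => \matrix_(a, b) ((nth 0%N (bidx B s) a == nth 0%N (bidx B t) b)%:R)).

Definition has_barcode (k : fieldType) (R : realType) (M : pmod k R) (B : seq (bar R)) : Prop :=
  all (@wf_bar R) B /\ pmod_iso M (barmod k B).

Definition blen (R : realType) (I : bar R) : \bar R := `|bd I - bb I|%E.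

Definition rho (R : realType) (p : \bar R) (B : seq (bar R)) : \bar R :=
  if p == +oo%E then (\big[maxe/0%E]_(I <- B) blen I)%E
  else if all (fun I => blen I \is a fin_num) B
  then ((\sum_(I <- B) (fine (blen I)) `^ (fine p)) `^ (fine p)^-1)%:E
  else +oo%E.

Definition id_amp_bounding (k : fieldType) (R : realType) (p q : \bar R) (K : R) : Prop :=
  forall M : pmod k R, is_pmod M -> finitely_encoded M ->
  forall B, has_barcode M B -> (rho q B <= K%:E * rho p B)%E.

(* Main.v *)
Require Import Defs.
From mathcomp Require Import all_boot all_order all_algebra.
From mathcomp Require Import boolp classical_sets reals constructive_ereal ereal exp.
From mathcomp Require Import ring lra.
Import Order.TTheory GRing.Theory Num.Theory.
Local Open Scope ring_scope.
Section An.
Variable R : realType.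

Lemma term_le (l : seq R) p x : 0 < p -> all (fun y => 0 <= y) l -> x \in l ->
  x <= (\sum_(y <- l) y `^ p) `^ p^-1.
Proof.
move=> p0 /allP l0 xl.
have x0 : 0 <= x by exact: l0.
have -> : x = (x `^ p) `^ p^-1.
  by rewrite -powRrM mulfV ?gt_eqF // powRr1.
apply: ge0_ler_powR; rewrite ?nnegrE ?invr_ge0 ?powR_ge0 ?(ltW p0) //.
  by apply: sumr_ge0 => i _; apply: powR_ge0.
rewrite (big_rem x) //= lerDl; by apply: sumr_ge0 => i _; apply: powR_ge0.
Qed.

Lemma lp_mono (l : seq R) p q : 1 <= p -> p <= q -> all (fun y => 0 <= y) l ->
  (\sum_(y <- l) y `^ q) `^ q^-1 <= (\sum_(y <- l) y `^ p) `^ p^-1.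
Proof.
move=> p1 pq l0.
have p0 : 0 < p by lra.
have q0 : 0 < q by lra.
set T := \sum_(y <- l) y `^ p.
set S := T `^ p^-1.
have T0 : 0 <= T by apply: sumr_ge0 => i _; apply: powR_ge0.
have S0 : 0 <= S by apply: powR_ge0.
have SpT : S `^ p = T by rewrite /S -powRrM mulVf ?gt_eqF // powRr1.
have Hs : \sum_(y <- l) y `^ q <= S `^ q.
  have -> : S `^ q = T * S `^ (q - p).
    rewrite -SpT -powRD; first by rewrite addrC subrK.
    by rewrite addrC subrK gt_eqF.
  rewrite big_seq mulr_suml [X in _ <= X]big_seq.
  apply: ler_sum => x xl.
  have x0 : 0 <= x by move/allP: l0; apply.
  have -> : x `^ q = x `^ p * x `^ (q - p).
    rewrite -powRD; first by rewrite addrC subrK.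
    by rewrite addrC subrK gt_eqF.
  apply: ler_wpM2l; first exact: powR_ge0.
  apply: ge0_ler_powR; rewrite ?nnegrE ?subr_ge0 //.
  exact: term_le.
have -> : S = (S `^ q) `^ q^-1 by rewrite -powRrM mulfV ?gt_eqF // powRr1.
apply: ge0_ler_powR; rewrite ?nnegrE ?invr_ge0 ?powR_ge0 ?(ltW q0) //.
by apply: sumr_ge0 => i _; apply: powR_ge0.
Qed.

Lemma exists_big (K a : R) : 0 < a -> exists n : nat, (0 < n)%N /\ K < n%:R `^ a.
Proof.
move=> a0.
have K1 : 0 <= `|K| + 1 by rewrite addr_ge0 ?normr_ge0.
set x := (`|K| + 1) `^ a^-1.
have x0 : 0 <= x by apply: powR_ge0.
exists (Num.trunc x).+1; split => //.
have hx : x < (Num.trunc x).+1%:R by rewrite truncnS_gt.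
apply: (lt_le_trans (y := `|K| + 1)).
  have := ler_norm K; lra.
have -> : `|K| + 1 = x `^ a by rewrite -powRrM mulVf ?gt_eqF // powRr1.
apply: ge0_ler_powR; rewrite ?nnegrE ?ler0n //; lra.

Qed.

End An.
Set Implicit Arguments. Unset Strict Implicit.
Definition Tm (k : fieldType) (s1 s2 : seq nat) : 'M[k]_(size s1, size s2) :=
  \matrix_(a, b) ((nth 0%N s1 a == nth 0%N s2 b)%:R).

Lemma Tm_id (k : fieldType) s : uniq s -> Tm k s s = 1%:M.
Proof.
move=> us; apply/matrixP => a b; rewrite !mxE nth_uniq //.
Qed.

Lemma Tm_mul (k : fieldType) s1 s2 s3 : uniq s2 ->
  (forall j, j \in s1 -> j \in s3 -> j \in s2) ->
  Tm k s1 s2 *m Tm k s2 s3 = Tm k s1 s3.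
Proof.
move=> u2 H; apply/matrixP => a b; rewrite !mxE.
have [e|ne] := eqVneq (nth 0%N s1 a) (nth 0%N s3 b).
  have j2 : nth 0%N s1 a \in s2 by apply: H; [exact: mem_nth | rewrite e; exact: mem_nth].
  have ci : (index (nth 0%N s1 a) s2 < size s2)%N by rewrite index_mem.
  rewrite (bigD1 (Ordinal ci)) //= !mxE /= nth_index // -e eqxx mulr1 big1 ?addr0 //.
  move=> c nc; rewrite !mxE.
  have [e2|] := eqVneq (nth 0%N s1 a) (nth 0%N s2 c); last by rewrite mul0r.
  exfalso; move/negP: nc; apply; apply/eqP/val_inj => /=.
  by rewrite e2 index_uniq.
rewrite big1 // => c _; rewrite !mxE.
have [e2|] := eqVneq (nth 0%N s1 a) (nth 0%N s2 c); last by rewrite mul0r.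
by rewrite -e2 (negbTE ne) mulr0.
Qed.

Section Mod.
Variables (k : fieldType) (R : realType).

Lemma in_bar_convex {I : bar R} {s t u : R} : s <= t -> t <= u ->
  in_bar I s -> in_bar I u -> in_bar I t.
Proof.
move=> st tu; rewrite /in_bar.
have st' : (s%:E <= t%:E)%E by rewrite lee_fin.
have tu' : (t%:E <= u%:E)%E by rewrite lee_fin.
case: (bclosed I); case: (dclosed I) => /andP[h1 _] /andP[_ h2]; apply/andP; split.
all: try exact: le_trans h1 st'.
all: try exact: le_trans tu' h2.
all: try exact: lt_le_trans h1 st'.
all: try exact: le_lt_trans tu' h2.
Qed.

Lemma mem_bidx (B : seq (bar R)) t j :
  (j \in bidx B t) = (j < size B)%N && in_bar (nth (bar0 R) B j) t.
Proof. by rewrite /bidx mem_filter mem_iota /= andbC. Qed.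

Lemma uniq_bidx (B : seq (bar R)) t : uniq (bidx B t).
Proof. by rewrite /bidx filter_uniq // iota_uniq. Qed.

Lemma barmod_pmod (B : seq (bar R)) : is_pmod (barmod k B).
Proof.
split.
  move=> t; exact (@Tm_id k _ (uniq_bidx B t)).
move=> s t u st tu.
apply: (@Tm_mul k _ _ _ (uniq_bidx B t)) => j.
rewrite !mem_bidx => /andP[jB hs] /andP[_ hu].
by rewrite jB (in_bar_convex st tu hs hu : in_bar _ t).
Qed.

Lemma pmod_iso_refl (M : pmod k R) : pmod_iso M M.
Proof.
exists (fun t => 1%:M); split.
  by move=> t; exists 1%:M; rewrite mulmx1.
by move=> s t _; rewrite mulmx1 mul1mx.
Qed.

End Mod.
Section FE.
Variables (k : fieldType) (R : realType).

Definition bar01 : bar R := @Bar R 0%:E 1%:E true true.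

Definition piR (t : R) : 'I_3 :=
  if t < 0 then ord0 else if t <= 1 then inord 1 else ord_max.

Definition repR (x : 'I_3) : R :=
  if (x == 0 :> nat) then -1 else if (x == 1 :> nat) then 0 else 2.

Lemma in01 t : in_bar bar01 t = (0 <= t) && (t <= 1).
Proof. by rewrite /in_bar /= !lee_fin. Qed.

Lemma rep_pi t : in_bar bar01 (repR (piR t)) = in_bar bar01 t.
Proof.
rewrite !in01 /piR /repR.
case: (ltP t 0) => t0 /=; first by apply/idP/idP; lra.
case: (leP t 1) => t1 /=; rewrite ?inordK //=; apply/idP/idP; lra.
Qed.

Lemma piR_mono s t : s <= t -> (piR s <= piR t)%N.
Proof.
move=> st; rewrite /piR.
case: (ltP s 0) => s0; first by [].
case: (ltP t 0) => t0; first lra.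
case: (leP s 1) => s1; case: (leP t 1) => t1; rewrite ?inordK //; lra.
Qed.

Lemma repR_mono (x y : 'I_3) : (x <= y)%N -> repR x <= repR y.
Proof.
case: x => [[|[|[|x]]] hx] //; case: y => [[|[|[|y]]] hy] //= _; rewrite /repR /=; lra.
Qed.

Lemma fe_barmod (B : seq (bar R)) :
  (forall j t, (j < size B)%N -> in_bar (nth (bar0 R) B j) (repR (piR t)) = in_bar (nth (bar0 R) B j) t) ->
  finitely_encoded (barmod k B).
Proof.
move=> HB.
have memE t j : (j \in bidx B (repR (piR t))) = (j \in bidx B t).
  rewrite !mem_bidx; case jB: (j < size B)%N => //=.
  by rewrite HB.
exists 'I_3, (fun x y : 'I_3 => (x <= y)%N); split.
  split; first by move=> x; exact: leqnn.
  split; first by move=> x y /andP[h1 h2]; apply: val_inj; apply/eqP; rewrite eqn_leq h1 h2.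
  by move=> x y z; exact: leq_trans.
exists piR; split; first exact: piR_mono.
exists (@FPMod k _ (fun x => size (bidx B (repR x)))
          (fun x y => Tm k (bidx B (repR x)) (bidx B (repR y)))).
split.
  split; first by move=> x; exact (@Tm_id k _ (uniq_bidx B (repR x))).
  move=> x y z /repR_mono xy /repR_mono yz.
  apply: (@Tm_mul k _ _ _ (uniq_bidx B (repR y))) => j.
  rewrite !mem_bidx => /andP[jB hs] /andP[_ hu].
  by rewrite jB (in_bar_convex xy yz hs hu : in_bar _ _).
exists (fun t => Tm k (bidx B t) (bidx B (repR (piR t)))); split.
  move=> t; exists (Tm k (bidx B (repR (piR t))) (bidx B t)); split.
    rewrite (@Tm_mul k _ _ _ (uniq_bidx B (repR (piR t)))).
      exact: Tm_id (uniq_bidx B t).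
    by move=> j _; rewrite memE.
  rewrite (@Tm_mul k _ _ _ (uniq_bidx B t)).
    exact: Tm_id (uniq_bidx B _).
  by move=> j; rewrite memE.
move=> s t st.
change (Tm k (bidx B s) (bidx B t) *m Tm k (bidx B t) (bidx B (repR (piR t))) =
  Tm k (bidx B s) (bidx B (repR (piR s))) *m Tm k (bidx B (repR (piR s))) (bidx B (repR (piR t)))).
rewrite (@Tm_mul k _ _ _ (uniq_bidx B t)); last by move=> j _; rewrite memE.
rewrite (@Tm_mul k _ _ _ (uniq_bidx B (repR (piR s)))) //.
by move=> j js _; rewrite memE.
Qed.

End FE.
Unset Implicit Arguments. Set Strict Implicit.
Lemma rho_mono (R : realType) (B : seq (bar R)) (p q : \bar R) : (1 <= p)%E -> (p <= q)%E ->
  (rho q B <= rho p B)%E.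
Proof.
move=> p1 pq.
case: p p1 pq => [p||]; last first.
- move=> h; exfalso; move: h; rewrite leeNy_eq => /eqP h; discriminate h.
- by move=> _; rewrite leye_eq => /eqP ->; exact: le_refl.
rewrite lee_fin => p1 pq.
have p0 : 0 < p by lra.
rewrite /rho.
have -> : (p%:E == +oo)%E = false by [].
case allf : (all (fun I : bar R => blen I \is a fin_num) B); last first.
  case: (q == +oo)%E; exact: leey.
set L := map (@blen R) B.
have Lf : all (fun y => y \is a fin_num) L by rewrite all_map.
have LE : \sum_(I <- B) fine (blen I) `^ fine p%:E = \sum_(y <- map fine L) y `^ p.
  by rewrite /L -map_comp big_map.
have l0 : all (fun y => 0 <= y) (map fine L).
  have L0 : all (fun z => 0 <= z)%E L.
    by rewrite /L; elim: (B) => //= I B' ->; rewrite andbT abse_ge0.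
  by apply/allP => y /mapP[z zL ->]; apply: fine_ge0; move/allP: L0; apply.
rewrite LE /=.
case: q pq => [q||] pq.
- rewrite lee_fin in pq; have -> : (q%:E == +oo)%E = false by [].
  have LEq : \sum_(I <- B) fine (blen I) `^ q = \sum_(y <- map fine L) y `^ q.
    by rewrite /L -map_comp big_map.
  rewrite lee_fin /= LEq.
  exact: lp_mono.
- rewrite eqxx.
  rewrite -(big_map (@blen R) xpredT (fun x => x)) -/L big_seq.
  apply: bigmax_le; first by rewrite lee_fin; apply: powR_ge0.
  move=> y yL.
  have yf : y \is a fin_num by move/allP: Lf; apply.
  rewrite -(fineK yf) lee_fin; apply: term_le => //.
  exact: map_f.
- exfalso; move: pq; rewrite leeNy_eq => /eqP h; discriminate h.
Qed.
Lemma blen01 (R : realType) : blen (bar01 R) = 1%E.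
Proof. by rewrite /blen /= subr0 normr1. Qed.

Lemma sum_nseq1 (R : realType) n (r : R) :
  \sum_(I <- nseq n (bar01 R)) fine (blen I) `^ r = n%:R.
Proof.
rewrite big_nseq blen01 /= powR1.
by elim: n => //= n ->; rewrite -natr1 addrC.
Qed.

Lemma max_nseq1 (R : realType) n : (0 < n)%N ->
  (\big[maxe/0%E]_(I <- nseq n (bar01 R)) blen I = 1)%E.
Proof.
rewrite big_nseq blen01.
case: n => // n _; elim: n => [|n IH] /=.
  by apply/max_idPl; rewrite lee_fin ler01.
by rewrite /= in IH; rewrite IH maxxx.
Qed.

Lemma all_fin_nseq (R : realType) n :
  all (fun I : bar R => blen I \is a fin_num) (nseq n (bar01 R)).
Proof. by rewrite all_nseq blen01 orbT. Qed.

Lemma counter (k : fieldType) (R : realType) (p q : \bar R) (K : R) :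
  (1 <= q)%E -> (q < p)%E -> 0 <= K -> ~ id_amp_bounding k p q K.
Proof.
move=> q1 qp K0 H.
have [q' qE] : exists q' : R, q = q'%:E.
  case: q q1 qp {H} => [q'||] q1 qp; first by exists q'.
  - by move: qp; rewrite ltNge leey.
  - exfalso; move: q1; rewrite leeNy_eq => /eqP h; discriminate h.
subst q; rewrite lee_fin in q1.
have q0 : 0 < q' by lra.
set a := q'^-1 - (if p is r%:E then r^-1 else 0).
have a0 : 0 < a.
  rewrite /a; clear a; case: p qp {H} => [r||] qp.
  - rewrite lte_fin in qp; rewrite subr_gt0 ltf_pV2 ?posrE //; lra.
  - by rewrite subr0 invr_gt0.
  - by move: qp; rewrite ltNge leNye.
have [n [n0 Kn]] := @exists_big R K a a0.
set B := nseq n (bar01 R).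
have := H (barmod k B) (barmod_pmod k B).
have fe : finitely_encoded (barmod k B).
  apply: fe_barmod => j t; rewrite size_nseq => jn.
  by rewrite nth_nseq jn rep_pi.
move=> /(_ fe B).
have hb : has_barcode (barmod k B) B.
  split; last exact: pmod_iso_refl.
  by rewrite all_nseq /wf_bar /= lee_fin ler01 orbT.
move=> /(_ hb).
have n0' : 0 < n%:R :> R by rewrite ltr0n.
rewrite /rho all_fin_nseq sum_nseq1 /=.
move: a0 Kn; rewrite /a; clear a.
case: p qp {H} => [r||] qp a0 Kn.
- have -> : (r%:E == +oo)%E = false by [].
  rewrite sum_nseq1 /= -EFinM lee_fin.
  have -> : n%:R `^ q'^-1 = n%:R `^ (q'^-1 - r^-1) * n%:R `^ r^-1 :> R.
    rewrite -powRD; first by rewrite subrK.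
    by rewrite subrK invr_eq0 gt_eqF.
  apply/negP; rewrite -ltNge.
  by rewrite ltr_pM2r ?powR_gt0.
- rewrite eqxx max_nseq1 // -EFinM lee_fin mulr1.
  apply/negP; rewrite -ltNge.
  by move: Kn; rewrite subr0.
- by move: qp; rewrite ltNge leNye.
Qed.

Theorem mainTheorem13 (k : fieldType) (R : realType) (p q : \bar R) :
  (1 <= p)%E -> (1 <= q)%E ->
  (id_amp_bounding k p q 1 <-> (p <= q)%E) /\
  ((q < p)%E -> forall K : R, 0 <= K -> ~ id_amp_bounding k p q K).
Proof.
move=> p1 q1; split; last by move=> qp K K0; exact: counter.
split.
  move=> H; case: (leP p q) => // qp; exfalso.
  exact: (@counter k R p q 1 q1 qp ler01 H).
move=> pq M _ _ B _; rewrite mul1e; exact: rho_mono.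
Qed.
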